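(* Fix real parameters $A,B$ (the conserved momenta $p_\psi,p_\phi$ of the Lagrange top) and consider the reduced phase space with canonical coordinates $(\theta,p_\theta)$, $\theta\in(0,\pi)$, $\{\theta,p_\theta\}=1$, and the Hamiltonian $$H(\theta,p_\theta)=p_\theta^2+\frac{A^2+2AB\cos\theta+B^2}{\sin^2\theta}+\cos\theta .$$ Put $u=\cos\theta$, $v=\sin\theta\,p_\theta$, and for $E\in\mathbb R$ let $X_E$ be the elliptic curve $$X_E:\ y^2=f_E(x),\qquad f_E(x)=x^3-Ex^2-(1+2AB)x+E-A^2-B^2 ,$$ with its group law whose neutral element is the point at infinity (three affine points sum to zero iff they are collinear, and $-(x,y)=(x,-y)$). Then $P=(u,v)$ lies on $X_{H(\theta,p_\theta)}$. Define a point $(\tilde u,\tilde v)\in X_{H(\theta,p_\theta)}$ in one of three ways: 1. (addition) $(\tilde u,\tilde v)=P+P'$, where $P'=(\lambda,\mu)$, $\lambda$ is a fixed real parameter and $\mu=\mu(\theta,p_\theta)$ is a (locally smooth) branch of $\sqrt{f_{H(\theta,p_\theta)}(\lambda)}$; explicitly, with $m=(v-\mu)/(u-\lambda)$ and $H=H(\theta,p_\theta)$, $$\tilde u=-u-\lambda+H+m^2,\qquad \tilde v=-v-m(\tilde u-u);$$ 2. (doubling) $(\tilde u,\tilde v)=[2]P$; explicitly, with $m=\dfrac{3u^2-2Hu-1-2AB}{2v}$, $$\tilde u=-2u+H+m^2,\qquad \tilde v=-v-m(\tilde u-u);$$ 3. (tripling) $(\tilde u,\tilde v)=[3]P$. Define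 $(\tilde\theta,\tilde p_\theta)$ by $\cos\tilde\theta=\tilde u$, $\sin\tilde\theta\,\tilde p_\theta=\tilde v$ (on the open set where these are defined and $|\tilde u|<1$). Then the map $(\theta,p_\theta)\mapsto(\tilde\theta,\tilde p_\theta)$ is a canonical transformation of valence $c$, i.e. $\{\tilde\theta,\tilde p_\theta\}=c$, with $c=1,2,3$ in cases 1, 2, 3 respectively, and it preserves the Hamiltonian: $H(\tilde\theta,\tilde p_\theta)=H(\theta,p_\theta)$ (so it is an auto-Bäcklund transformation of the Lagrange top).
   Context: A canonical transformation of valence $c$ is a map $(q,p)\mapsto(\tilde q,\tilde p)$ whose Jacobian matrix $V$ satisfies $V^\top\Omega V=c\,\Omega$ with $\Omega=\begin{pmatrix}0&I\\-I&0\end{pmatrix}$; equivalently the canonical Poisson brackets of the new variables are $c$ times the canonical ones. An auto-Bäcklund transformation (in the Toda–Wadati sense) is a canonical transformation preserving the form of the Hamiltonian(s). The full Lagrange top Hamiltonian in Euler angles is $p_\theta^2+\frac{p_\phi^2+2\cos\theta\,p_\phi p_\psi+p_\psi^2}{\sin^2\theta}+\cos\theta$, with $A=p_\psi$, $B=p_\phi$ conserved. *)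

(* Defs.v *)
From Stdlib Require Import Reals.
Open Scope R_scope.

Definition Ham (A B th p : R) : R :=
  p ^ 2 + (A ^ 2 + 2 * A * B * cos th + B ^ 2) / (sin th) ^ 2 + cos th.

Definition fE (A B E x : R) : R :=
  x ^ 3 - E * x ^ 2 - (1 + 2 * A * B) * x + E - A ^ 2 - B ^ 2.

(* Chord addition on X_E of two affine points with distinct x-coordinates. *)
Definition add_slope (x1 y1 x2 y2 : R) : R := (y1 - y2) / (x1 - x2).
Definition add_x (E x1 y1 x2 y2 : R) : R :=
  - x1 - x2 + E + (add_slope x1 y1 x2 y2) ^ 2.
Definition add_y (E x1 y1 x2 y2 : R) : R :=
  - y1 - add_slope x1 y1 x2 y2 * (add_x E x1 y1 x2 y2 - x1).

(* Tangent doubling on X_E of an affine point with y <> 0. *)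
Definition dbl_slope (A B E x y : R) : R :=
  (3 * x ^ 2 - 2 * E * x - 1 - 2 * A * B) / (2 * y).
Definition dbl_x (A B E x y : R) : R := - 2 * x + E + (dbl_slope A B E x y) ^ 2.
Definition dbl_y (A B E x y : R) : R :=
  - y - dbl_slope A B E x y * (dbl_x A B E x y - x).

Definition tpl_x (A B E x y : R) : R :=
  add_x E x y (dbl_x A B E x y) (dbl_y A B E x y).
Definition tpl_y (A B E x y : R) : R :=
  add_y E x y (dbl_x A B E x y) (dbl_y A B E x y).

Definition theta_of (u : R) : R := acos u.
Definition ptheta_of (u v : R) : R := v / sin (acos u).

Definition T1_u (A B lam : R) (mu : R -> R -> R) (th p : R) : R :=
  add_x (Ham A B th p) (cos th) (sin th * p) lam (mu th p).
Definition T1_v (A B lam : R) (mu : R -> R -> R) (th p : R) : R :=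
  add_y (Ham A B th p) (cos th) (sin th * p) lam (mu th p).
Definition T2_u (A B th p : R) : R := dbl_x A B (Ham A B th p) (cos th) (sin th * p).
Definition T2_v (A B th p : R) : R := dbl_y A B (Ham A B th p) (cos th) (sin th * p).
Definition T3_u (A B th p : R) : R := tpl_x A B (Ham A B th p) (cos th) (sin th * p).
Definition T3_v (A B th p : R) : R := tpl_y A B (Ham A B th p) (cos th) (sin th * p).

Definition has_partials (F : R -> R -> R) (th p a b : R) : Prop :=
  derivable_pt_lim (fun t => F t p) th a /\ derivable_pt_lim (fun q => F th q) p b.

Definition poisson_bracket_eq (F G : R -> R -> R) (th p c : R) : Prop :=
  exists Ft Fp Gt Gp, has_partials F th p Ft Fp /\ has_partials G th p Gt Gp /\
    Ft * Gp - Fp * Gt = c.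

Definition continuous2_at (F : R -> R -> R) (th p : R) : Prop :=
  forall eps, 0 < eps -> exists del, 0 < del /\
    forall t q, Rabs (t - th) < del -> Rabs (q - p) < del ->
      Rabs (F t q - F th p) < eps.

Definition C1_sqrt_branch (A B lam : R) (mu : R -> R -> R) (th0 p0 del : R) : Prop :=
  exists dmt dmp : R -> R -> R,
    forall t q, Rabs (t - th0) < del -> Rabs (q - p0) < del ->
      mu t q ^ 2 = fE A B (Ham A B t q) lam /\
      has_partials mu t q (dmt t q) (dmp t q) /\
      continuous2_at dmt t q /\ continuous2_at dmp t q.

(* Main.v *)
Require Import Defs.
From Stdlib Require Import Reals Lra Lia.
Open Scope R_scope.

Definition fp (A B E x : R) : R := 3*x^2 - 2*E*x - 1 - 2*A*B.

Definition Good (A B E Et Eq x y Xt Xq Yt Yq k : R) : Prop :=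
  y^2 = fE A B E x /\
  2*y*Yt = fp A B E x * Xt + (1 - x^2)*Et /\
  2*y*Yq = fp A B E x * Xq + (1 - x^2)*Eq /\
  Xt*Eq - Xq*Et = 2*y*k /\
  Yt*Eq - Yq*Et = fp A B E x * k.

Definition jM (x1 y1 x2 y2 X1 Y1 X2 Y2 : R) : R :=
  ((Y1 - Y2) - add_slope x1 y1 x2 y2 * (X1 - X2)) / (x1 - x2).
Definition jX3 (x1 y1 x2 y2 Ee X1 Y1 X2 Y2 : R) : R :=
  Ee + 2 * add_slope x1 y1 x2 y2 * jM x1 y1 x2 y2 X1 Y1 X2 Y2 - X1 - X2.
Definition jY3 (E x1 y1 x2 y2 Ee X1 Y1 X2 Y2 : R) : R :=
  - Y1 - jM x1 y1 x2 y2 X1 Y1 X2 Y2 * (add_x E x1 y1 x2 y2 - x1)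
  - add_slope x1 y1 x2 y2 * (jX3 x1 y1 x2 y2 Ee X1 Y1 X2 Y2 - X1).

Lemma add_good A B E Et Eq x1 y1 x2 y2 X1t X1q Y1t Y1q X2t X2q Y2t Y2q k1 k2 :
  Good A B E Et Eq x1 y1 X1t X1q Y1t Y1q k1 ->
  Good A B E Et Eq x2 y2 X2t X2q Y2t Y2q k2 ->
  x1 <> x2 ->
  Good A B E Et Eq (add_x E x1 y1 x2 y2) (add_y E x1 y1 x2 y2)
    (jX3 x1 y1 x2 y2 Et X1t Y1t X2t Y2t) (jX3 x1 y1 x2 y2 Eq X1q Y1q X2q Y2q)
    (jY3 E x1 y1 x2 y2 Et X1t Y1t X2t Y2t) (jY3 E x1 y1 x2 y2 Eq X1q Y1q X2q Y2q)
    (k1 + k2).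
Proof.
  intros [C1 [L1t [L1q [I1 J1]]]] [C2 [L2t [L2q [I2 J2]]]] H12.
  assert (H21 : x2 - x1 <> 0) by (intro; apply H12; lra).
  assert (H12' : x1 - x2 <> 0) by (intro; apply H12; lra).
  unfold jY3, jX3.
  set (Mt := jM x1 y1 x2 y2 X1t Y1t X2t Y2t).
  set (Mq := jM x1 y1 x2 y2 X1q Y1q X2q Y2q).
  assert (HMt : Y1t + Mt*(x2-x1) + add_slope x1 y1 x2 y2*(X2t-X1t) = Y2t)
    by (unfold Mt, jM; field; auto).
  assert (HMq : Y1q + Mq*(x2-x1) + add_slope x1 y1 x2 y2*(X2q-X1q) = Y2q)
    by (unfold Mq, jM; field; auto).
  assert (Hw2 : y1 + add_slope x1 y1 x2 y2 * (x2 - x1) = y2)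
    by (unfold add_slope; field; auto).
  unfold add_y, add_x in *.
  set (m := add_slope x1 y1 x2 y2) in *.
  set (x3 := - x1 - x2 + E + m^2).
  set (y3 := - y1 - m * (x3 - x1)).
  assert (KF1 : (x2-x1)*(fp A B E x1 - 2*m*y1 - (x1-x2)*(x1-x3))
     = (fE A B E x2 - (y1+m*(x2-x1))^2) - (fE A B E x1 - y1^2))
    by (unfold x3, fp, fE; ring).
  assert (KF2 : (x2-x1)*(fp A B E x2 - 2*m*(y1+m*(x2-x1)) - (x2-x1)*(x2-x3))
     = (fE A B E x2 - (y1+m*(x2-x1))^2) - (fE A B E x1 - y1^2))
    by (unfold x3, fp, fE; ring).
  assert (KF3 : (x2-x1)*(fp A B E x3 - 2*m*(y1+m*(x3-x1)) - (x3-x1)*(x3-x2))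
     = (fE A B E x2 - (y1+m*(x2-x1))^2) - (fE A B E x1 - y1^2))
    by (unfold x3, fp, fE; ring).
  assert (KC3 : (x2-x1)*(fE A B E x3 - (y1+m*(x3-x1))^2)
     = (fE A B E x1 - y1^2)*(x2-x3) + (fE A B E x2 - (y1+m*(x2-x1))^2)*(x3-x1))
    by (unfold x3, fp, fE; ring).
  rewrite Hw2, <- C1, <- C2 in KF1, KF2, KF3, KC3.
  replace (y1 + m*(x3-x1)) with (-y3) in KF3, KC3 by (unfold y3; ring).
  assert (F1 : fp A B E x1 - 2*m*y1 = (x1-x2)*(x1-x3)).
  { apply (Rmult_eq_reg_l (x2-x1)); auto. lra. }
  assert (F2 : fp A B E x2 - 2*m*y2 = (x2-x1)*(x2-x3)).
  { apply (Rmult_eq_reg_l (x2-x1)); auto. lra. }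
  assert (F3 : fp A B E x3 + 2*m*y3 = (x3-x1)*(x3-x2)).
  { apply (Rmult_eq_reg_l (x2-x1)); auto. lra. }
  assert (C3 : y3^2 = fE A B E x3).
  { apply (Rmult_eq_reg_l (x2-x1)); auto.
    replace (y3^2) with ((-y3)^2) by ring. lra. }
  assert (DC : forall Ee X1 Y1 X2 M,
    let X3 := Ee + 2*m*M - X1 - X2 in
    let w3 := y1 + m*(x3-x1) in
    let W3 := Y1 + M*(x3-x1) + m*(X3-X1) in
    let w2 := y1 + m*(x2-x1) in
    let W2 := Y1 + M*(x2-x1) + m*(X2-X1) in
    (X2-X1)*(fE A B E x3 - w3^2)
      + (x2-x1)*(fp A B E x3*X3 + (1-x3^2)*Ee - 2*w3*W3)
    = (fp A B E x1*X1 + (1-x1^2)*Ee - 2*y1*Y1)*(x2-x3)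
      + (fE A B E x1 - y1^2)*(X2-X3)
      + (fp A B E x2*X2 + (1-x2^2)*Ee - 2*w2*W2)*(x3-x1)
      + (fE A B E x2 - w2^2)*(X3-X1)).
  { intros. subst X3 w3 W3 w2 W2 x3. unfold fp, fE. ring. }
  split; [exact C3|].
  split; [|split; [|split]].
  - pose proof (DC Et X1t Y1t X2t Mt) as D. cbv zeta in D.
    rewrite Hw2, HMt in D.
    replace (y1 + m*(x3-x1)) with (-y3) in D by (unfold y3; ring).
    assert (E0 : fE A B E x3 - (-y3)^2 = 0) by (rewrite <- C3; ring).
    assert (E1 : fp A B E x1*X1t + (1-x1^2)*Et - 2*y1*Y1t = 0) by lra.
    assert (E2 : fp A B E x2*X2t + (1-x2^2)*Et - 2*y2*Y2t = 0) by lra.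
    rewrite E0, E1, E2, <- C1, <- C2 in D.
    replace (Y1t + Mt * (x3 - x1) + m * (Et + 2 * m * Mt - X1t - X2t - X1t))
      with (- (- Y1t - Mt * (x3 - x1) - m * (Et + 2 * m * Mt - X1t - X2t - X1t))) in D by ring.
    apply (Rmult_eq_reg_l (x2-x1)); auto. lra.
  - pose proof (DC Eq X1q Y1q X2q Mq) as D. cbv zeta in D.
    rewrite Hw2, HMq in D.
    replace (y1 + m*(x3-x1)) with (-y3) in D by (unfold y3; ring).
    assert (E0 : fE A B E x3 - (-y3)^2 = 0) by (rewrite <- C3; ring).
    assert (E1 : fp A B E x1*X1q + (1-x1^2)*Eq - 2*y1*Y1q = 0) by lra.
    assert (E2 : fp A B E x2*X2q + (1-x2^2)*Eq - 2*y2*Y2q = 0) by lra.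
    rewrite E0, E1, E2, <- C1, <- C2 in D.
    apply (Rmult_eq_reg_l (x2-x1)); auto. lra.
  - assert (LM : Mt*Eq - Mq*Et = (x1-x3)*k1 + (x2-x3)*k2).
    { apply (Rmult_eq_reg_l (x1-x2)); auto.
      transitivity ((Y1t*Eq - Y1q*Et) - (Y2t*Eq - Y2q*Et)
          - m*((X1t*Eq - X1q*Et) - (X2t*Eq - X2q*Et))).
      { unfold Mt, Mq, jM. fold m. field. auto. }
      rewrite I1, I2, J1, J2.
      transitivity ((fp A B E x1 - 2*m*y1)*k1 - (fp A B E x2 - 2*m*y2)*k2); [ring|].
      rewrite F1, F2. ring. }
    replace ((Et + 2 * m * Mt - X1t - X2t) * Eq - (Eq + 2 * m * Mq - X1q - X2q) * Et)
      with (2*m*(Mt*Eq - Mq*Et) - (X1t*Eq - X1q*Et) - (X2t*Eq - X2q*Et)) by ring.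
    rewrite LM, I1, I2, <- Hw2. unfold y3. ring.
  - assert (LM : Mt*Eq - Mq*Et = (x1-x3)*k1 + (x2-x3)*k2).
    { apply (Rmult_eq_reg_l (x1-x2)); auto.
      transitivity ((Y1t*Eq - Y1q*Et) - (Y2t*Eq - Y2q*Et)
          - m*((X1t*Eq - X1q*Et) - (X2t*Eq - X2q*Et))).
      { unfold Mt, Mq, jM. fold m. field. auto. }
      rewrite I1, I2, J1, J2.
      transitivity ((fp A B E x1 - 2*m*y1)*k1 - (fp A B E x2 - 2*m*y2)*k2); [ring|].
      rewrite F1, F2. ring. }
    replace ((- Y1t - Mt * (x3 - x1) - m * (Et + 2 * m * Mt - X1t - X2t - X1t)) * Eq -
             (- Y1q - Mq * (x3 - x1) - m * (Eq + 2 * m * Mq - X1q - X2q - X1q)) * Et)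
      with (- (Y1t*Eq - Y1q*Et) - (Mt*Eq - Mq*Et)*(x3-x1)
            - m*(2*m*(Mt*Eq - Mq*Et) - 2*(X1t*Eq - X1q*Et) - (X2t*Eq - X2q*Et))) by ring.
    rewrite LM, I1, I2, J1.
    replace (fp A B E x3) with ((x3-x1)*(x3-x2) - 2*m*y3) by lra.
    replace (fp A B E x1) with ((x1-x2)*(x1-x3) + 2*m*y1) by lra.
    rewrite <- Hw2. unfold y3. ring.
Qed.

Definition jMd (A B E x y Ee X Y : R) : R :=
  ((6*x - 2*E)*X - 2*x*Ee - 2*dbl_slope A B E x y * Y) / (2*y).
Definition jXd (A B E x y Ee X Y : R) : R :=
  -2*X + Ee + 2*dbl_slope A B E x y * jMd A B E x y Ee X Y.
Definition jYd (A B E x y Ee X Y : R) : R :=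
  - Y - jMd A B E x y Ee X Y * (dbl_x A B E x y - x)
  - dbl_slope A B E x y * (jXd A B E x y Ee X Y - X).

Lemma dbl_good A B E Et Eq x1 y1 X1t X1q Y1t Y1q k :
  Good A B E Et Eq x1 y1 X1t X1q Y1t Y1q k ->
  y1 <> 0 ->
  Good A B E Et Eq (dbl_x A B E x1 y1) (dbl_y A B E x1 y1)
    (jXd A B E x1 y1 Et X1t Y1t) (jXd A B E x1 y1 Eq X1q Y1q)
    (jYd A B E x1 y1 Et X1t Y1t) (jYd A B E x1 y1 Eq X1q Y1q) (2*k).
Proof.
  intros [C1 [L1t [L1q [I1 J1]]]] Hy.
  unfold jYd, jXd.
  set (Mt := jMd A B E x1 y1 Et X1t Y1t).
  set (Mq := jMd A B E x1 y1 Eq X1q Y1q).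
  assert (Hm : 2*y1*dbl_slope A B E x1 y1 = fp A B E x1)
    by (unfold dbl_slope, fp; field; auto).
  assert (HMt : (6*x1 - 2*E)*X1t - 2*x1*Et - 2*Mt*y1 - 2*dbl_slope A B E x1 y1*Y1t = 0)
    by (unfold Mt, jMd; field; auto).
  assert (HMq : (6*x1 - 2*E)*X1q - 2*x1*Eq - 2*Mq*y1 - 2*dbl_slope A B E x1 y1*Y1q = 0)
    by (unfold Mq, jMd; field; auto).
  unfold dbl_y, dbl_x in *.
  set (m := dbl_slope A B E x1 y1) in *.
  set (x3 := -2*x1 + E + m^2).
  set (y3 := - y1 - m * (x3 - x1)).
  assert (KC3 : fE A B E x3 - (y1+m*(x3-x1))^2
     = (fE A B E x1 - y1^2) + (fp A B E x1 - 2*m*y1)*(x3-x1))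
    by (unfold x3, fp, fE; ring).
  assert (KF3 : fp A B E x3 - 2*m*(y1 + m*(x3-x1)) = (x3-x1)^2 + (fp A B E x1 - 2*m*y1))
    by (unfold x3, fp; ring).
  assert (Z1 : fp A B E x1 - 2*m*y1 = 0) by lra.
  rewrite Z1, <- C1 in KC3. rewrite Z1 in KF3.
  replace (y1 + m*(x3-x1)) with (-y3) in KF3, KC3 by (unfold y3; ring).
  assert (C3 : y3^2 = fE A B E x3).
  { replace (y3^2) with ((-y3)^2) by ring. lra. }
  assert (F3 : fp A B E x3 = (x3-x1)^2 - 2*m*y3) by lra.
  assert (DC : forall Ee X1 Y1 M,
    let X3 := -2*X1 + Ee + 2*m*M in
    let w3 := y1 + m*(x3-x1) in
    let W3 := Y1 + M*(x3-x1) + m*(X3-X1) in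
    fp A B E x3*X3 + (1-x3^2)*Ee - 2*w3*W3
    = (fp A B E x1*X1 + (1-x1^2)*Ee - 2*y1*Y1)
      + ((6*x1 - 2*E)*X1 - 2*x1*Ee - 2*M*y1 - 2*m*Y1)*(x3-x1)
      + (fp A B E x1 - 2*m*y1)*(X3-X1)).
  { intros. subst X3 w3 W3 x3. unfold fp. ring. }
  split; [exact C3|].
  assert (LM : Mt*Eq - Mq*Et = 2*k*(x1-x3)).
  { apply (Rmult_eq_reg_l (2*y1)); [|lra].
    transitivity ((6*x1-2*E)*(X1t*Eq - X1q*Et) - 2*m*(Y1t*Eq - Y1q*Et)).
    { unfold Mt, Mq, jMd. fold m. field. auto. }
    rewrite I1, J1. rewrite <- Hm. unfold x3. ring. }
  split; [|split; [|split]].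
  - pose proof (DC Et X1t Y1t Mt) as D. cbv zeta in D.
    rewrite HMt, Z1 in D.
    replace (y1 + m*(x3-x1)) with (-y3) in D by (unfold y3; ring).
    lra.
  - pose proof (DC Eq X1q Y1q Mq) as D. cbv zeta in D.
    rewrite HMq, Z1 in D.
    replace (y1 + m*(x3-x1)) with (-y3) in D by (unfold y3; ring).
    lra.
  - replace ((-2 * X1t + Et + 2 * m * Mt) * Eq - (-2 * X1q + Eq + 2 * m * Mq) * Et)
      with (-2*(X1t*Eq - X1q*Et) + 2*m*(Mt*Eq - Mq*Et)) by ring.
    rewrite LM, I1. unfold y3. ring.
  - replace ((- Y1t - Mt * (x3 - x1) - m * (-2 * X1t + Et + 2 * m * Mt - X1t)) * Eq -
             (- Y1q - Mq * (x3 - x1) - m * (-2 * X1q + Eq + 2 * m * Mq - X1q)) * Et)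
      with (- (Y1t*Eq - Y1q*Et) - (Mt*Eq - Mq*Et)*(x3-x1)
            - m*(-3*(X1t*Eq - X1q*Et) + 2*m*(Mt*Eq - Mq*Et))) by ring.
    rewrite LM, I1, J1, F3. rewrite <- Hm. unfold y3. ring.
Qed.

Lemma final_wedge A B E Et Eq x y Xt Xq Yt Yq k :
  Good A B E Et Eq x y Xt Xq Yt Yq k ->
  (Et <> 0 \/ Eq <> 0) -> 1 - x^2 <> 0 ->
  Xt*Yq - Xq*Yt = (1 - x^2)*k.
Proof.
  intros [C [Lt [Lq [I J]]]] HE Hx.
  destruct (Req_dec y 0) as [Hy|Hy].
  - subst y.
    destruct (Req_dec (fp A B E x) 0) as [Hf|Hf].
    + exfalso. rewrite Hf in Lt, Lq.
      destruct HE as [HE|HE]; apply HE;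
      apply (Rmult_eq_reg_l (1-x^2)); auto; lra.
    + apply (Rmult_eq_reg_l (fp A B E x)); auto.
      transitivity (Yq*(fp A B E x*Xt + (1-x^2)*Et) - Yt*(fp A B E x*Xq + (1-x^2)*Eq)
         + (1-x^2)*(Yt*Eq - Yq*Et)); [ring|].
      rewrite J, <- Lt, <- Lq. ring.
  - apply (Rmult_eq_reg_l (2*y)); [|lra].
    transitivity (Xt*(2*y*Yq) - Xq*(2*y*Yt)); [ring|].
    rewrite Lt, Lq.
    transitivity ((1-x^2)*(Xt*Eq - Xq*Et)); [ring|].
    rewrite I. ring.
Qed.
Notation D := derivable_pt_lim.

Lemma Dext f x l l' : D f x l -> l = l' -> D f x l'.
Proof. intros H ->; exact H. Qed.
Lemma Dconst c x : D (fun _ => c) x 0.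
Proof. exact (derivable_pt_lim_const c x). Qed.
Lemma Did x : D (fun t => t) x 1.
Proof. exact (derivable_pt_lim_id x). Qed.
Lemma Dplus f g x a b : D f x a -> D g x b -> D (fun t => f t + g t) x (a + b).
Proof. exact (derivable_pt_lim_plus f g x a b). Qed.
Lemma Dminus f g x a b : D f x a -> D g x b -> D (fun t => f t - g t) x (a - b).
Proof. exact (derivable_pt_lim_minus f g x a b). Qed.
Lemma Dopp f x a : D f x a -> D (fun t => - f t) x (- a).
Proof. exact (derivable_pt_lim_opp f x a). Qed.
Lemma Dmult f g x a b : D f x a -> D g x b -> D (fun t => f t * g t) x (a * g x + f x * b).
Proof. exact (derivable_pt_lim_mult f g x a b). Qed.
Lemma Ddiv f g x a b : D f x a -> D g x b -> g x <> 0 ->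
  D (fun t => f t / g t) x ((a * g x - b * f x) / (g x)²).
Proof. exact (derivable_pt_lim_div f g x a b). Qed.
Lemma Dpow f x a n : D f x a -> D (fun t => f t ^ n) x (INR n * f x ^ Init.Nat.pred n * a).
Proof.
  intro H. apply (derivable_pt_lim_comp f (fun y => y ^ n) x a _ H (derivable_pt_lim_pow _ n)).
Qed.
Lemma Dcos x : D (fun t => cos t) x (- sin x).
Proof. exact (derivable_pt_lim_cos x). Qed.
Lemma Dsin x : D (fun t => sin t) x (cos x).
Proof. exact (derivable_pt_lim_sin x). Qed.

Ltac dtac := repeat first
  [ eassumption | apply Dconst | apply Did | apply Dcos | apply Dsin
  | apply Dplus | apply Dminus | apply Dopp | apply Ddiv | apply Dpow | apply Dmult ].

Lemma D_loc_eq f g a l1 l2 del : 0 < del ->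
  (forall t, Rabs (t - a) < del -> f t = g t) -> D f a l1 -> D g a l2 -> l1 = l2.
Proof.
  intros Hd Heq H1 H2. apply (uniqueness_limite g a); [|exact H2].
  intros eps Heps. destruct (H1 eps Heps) as [d Hd'].
  assert (Hm : 0 < Rmin d del) by (apply Rmin_pos; [apply cond_pos|lra]).
  exists (mkposreal _ Hm). intros h Hh0 Hh. simpl in Hh.
  rewrite <- (Heq (a+h)), <- (Heq a).
  - apply Hd'; auto. apply Rlt_le_trans with (1 := Hh). apply Rmin_l.
  - rewrite Rminus_diag, Rabs_R0; lra.
  - replace (a + h - a) with h by ring. apply Rlt_le_trans with (1 := Hh). apply Rmin_r.
Qed.

Lemma D_acos u a du : D u a du -> -1 < u a < 1 ->
  D (fun s => acos (u s)) a (-1 / sqrt (1 - (u a)²) * du).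
Proof.
  intros H Hr.
  assert (Ha : D acos (u a) (-1 / sqrt (1 - (u a)²))).
  { apply (derive_pt_eq_1 _ _ _ (derivable_pt_acos _ Hr)). apply derive_pt_acos. }
  exact (derivable_pt_lim_comp u acos a du _ H Ha).
Qed.

Lemma D_sinacos u a du : D u a du -> -1 < u a < 1 ->
  D (fun s => sin (acos (u s))) a (u a * (-1 / sqrt (1 - (u a)²) * du)).
Proof.
  intros H Hr.
  pose proof (D_acos u a du H Hr) as H1.
  pose proof (derivable_pt_lim_comp (fun s => acos (u s)) sin a _ _ H1 (derivable_pt_lim_sin _)) as H2.
  rewrite cos_acos in H2 by lra. exact H2.
Qed.

Lemma pb_conv (U V : R -> R -> R) th p Ut Uq Vt Vq c :
  D (fun t => U t p) th Ut -> D (fun q => U th q) p Uq ->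
  D (fun t => V t p) th Vt -> D (fun q => V th q) p Vq ->
  -1 < U th p < 1 -> Ut*Vq - Uq*Vt = -c*(1 - (U th p)^2) ->
  poisson_bracket_eq (fun t q => theta_of (U t q))
    (fun t q => ptheta_of (U t q) (V t q)) th p c.
Proof.
  intros HUt HUq HVt HVq Hr Hw.
  set (u := U th p) in *.
  assert (Hpos : 0 < 1 - u²) by (unfold Rsqr; nra).
  set (S := sqrt (1 - u²)).
  assert (HS : 0 < S) by (apply sqrt_lt_R0; exact Hpos).
  assert (HS2 : S * S = 1 - u^2) by (unfold S; rewrite sqrt_sqrt; [unfold Rsqr; ring|lra]).
  assert (Hsa : sin (acos u) = S) by (unfold S; apply sin_acos; lra).
  pose proof (D_acos _ _ _ HUt Hr) as Ft.
  pose proof (D_acos _ _ _ HUq Hr) as Fq.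
  pose proof (D_sinacos _ _ _ HUt Hr) as St.
  pose proof (D_sinacos _ _ _ HUq Hr) as Sq.
  cbv beta in Ft, Fq, St, Sq. fold u in Ft, Fq, St, Sq. fold S in Ft, Fq, St, Sq.
  assert (Hne : sin (acos u) <> 0) by lra.
  pose proof (Ddiv (fun t => V t p) (fun t => sin (acos (U t p))) th _ _ HVt St Hne) as Gt.
  pose proof (Ddiv (fun q => V th q) (fun q => sin (acos (U th q))) p _ _ HVq Sq Hne) as Gq.
  cbv beta in Gt, Gq. fold u in Gt, Gq. rewrite Hsa in Gt, Gq.
  unfold poisson_bracket_eq, has_partials, theta_of, ptheta_of.
  eexists _, _, _, _. split; [split; [exact Ft|exact Fq]|].
  split; [split; [exact Gt|exact Gq]|].
  transitivity (-(Ut*Vq - Uq*Vt)/(S*S)).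
  { clearbody S u. unfold Rsqr. field. lra. }
  rewrite Hw, HS2. assert (0 < 1 - u^2) by nra. field. lra.
Qed.

Lemma ham_back A B E x y : -1 < x < 1 -> y^2 = fE A B E x ->
  Ham A B (theta_of x) (ptheta_of x y) = E.
Proof.
  intros Hr Hc. unfold Ham, theta_of, ptheta_of.
  assert (Hpos : 0 < 1 - x²) by (unfold Rsqr; nra).
  assert (HS : 0 < sqrt (1 - x²)) by (apply sqrt_lt_R0; exact Hpos).
  assert (HS2 : sqrt (1 - x²) * sqrt (1 - x²) = 1 - x^2)
    by (rewrite sqrt_sqrt; [unfold Rsqr; ring|lra]).
  rewrite sin_acos, cos_acos by lra.
  set (S := sqrt (1 - x²)) in *.
  unfold fE in Hc.
  transitivity ((y^2 + A^2 + 2*A*B*x + B^2)/(S*S) + x); [field; lra|].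
  rewrite HS2, Hc. field. nra.
Qed.

Lemma D_add (e x1 y1 x2 y2 : R -> R) a Ee X1 Y1 X2 Y2 :
  D e a Ee -> D x1 a X1 -> D y1 a Y1 -> D x2 a X2 -> D y2 a Y2 -> x1 a <> x2 a ->
  D (fun s => add_x (e s) (x1 s) (y1 s) (x2 s) (y2 s)) a
    (jX3 (x1 a) (y1 a) (x2 a) (y2 a) Ee X1 Y1 X2 Y2) /\
  D (fun s => add_y (e s) (x1 s) (y1 s) (x2 s) (y2 s)) a
    (jY3 (e a) (x1 a) (y1 a) (x2 a) (y2 a) Ee X1 Y1 X2 Y2).
Proof.
  intros He Hx1 Hy1 Hx2 Hy2 Hne.
  assert (Hn : x1 a - x2 a <> 0) by (intro; apply Hne; lra).
  unfold add_y, add_x, add_slope, jY3, jX3, jM, add_x, add_slope.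
  split; (eapply Dext; [dtac|]); cbv beta; simpl INR; simpl pred; unfold Rsqr; field; exact Hn.
Qed.

Lemma D_dbl A B (e x y : R -> R) a Ee X Y :
  D e a Ee -> D x a X -> D y a Y -> y a <> 0 ->
  D (fun s => dbl_x A B (e s) (x s) (y s)) a (jXd A B (e a) (x a) (y a) Ee X Y) /\
  D (fun s => dbl_y A B (e s) (x s) (y s)) a (jYd A B (e a) (x a) (y a) Ee X Y).
Proof.
  intros He Hx Hy Hne.
  assert (Hn : 2 * y a <> 0) by lra.
  unfold dbl_y, dbl_x, dbl_slope, jYd, jXd, jMd, dbl_x, dbl_slope.
  split; (eapply Dext; [dtac|]); cbv beta; simpl INR; simpl pred; unfold Rsqr; field; auto.
Qed.

Lemma D_fE A B (e x : R -> R) a Ee X :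
  D e a Ee -> D x a X ->
  D (fun s => fE A B (e s) (x s)) a (fp A B (e a) (x a) * X + (1 - (x a)^2) * Ee).
Proof.
  intros He Hx. unfold fE, fp.
  eapply Dext; [dtac|]. cbv beta; simpl INR; simpl pred. ring.
Qed.


Lemma ham_curve A B th p : 0 < th < PI ->
  (sin th * p)^2 = fE A B (Ham A B th p) (cos th).
Proof.
  intro Hth. pose proof (sin_gt_0 th ltac:(lra) ltac:(lra)) as Hs.
  pose proof (sin2_cos2 th) as H2. unfold Rsqr in H2.
  unfold fE, Ham. symmetry. apply Rminus_diag_uniq.
  transitivity ((p^2 + (A^2 + 2*A*B*cos th + B^2)/(sin th)^2)*(1 - sin th^2 - cos th^2)).
  - field. lra.
  - replace (1 - sin th^2 - cos th^2) with 0 by (simpl; lra). ring.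
Qed.

Lemma ham_Dt A B th p : 0 < th < PI -> exists Et, D (fun t => Ham A B t p) th Et.
Proof.
  intro Hth. pose proof (sin_gt_0 th ltac:(lra) ltac:(lra)) as Hs.
  unfold Ham. eexists. dtac. cbv beta. apply pow_nonzero. lra.
Qed.

Lemma ham_Dq A B th p : 0 < th < PI -> D (fun q => Ham A B th q) p (2*p).
Proof.
  intro Hth. pose proof (sin_gt_0 th ltac:(lra) ltac:(lra)) as Hs.
  assert (H0 : sin th ^ 2 <> 0) by (apply pow_nonzero; lra).
  unfold Ham. eapply Dext; [dtac|]. cbv beta. simpl INR; simpl pred. unfold Rsqr. field.
Qed.

Lemma base_L A B th p Et : 0 < th < PI -> D (fun t => Ham A B t p) th Et ->
  2*(sin th * p)*(cos th * p) = fp A B (Ham A B th p) (cos th) * (- sin th) + (1 - (cos th)^2)*Et.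
Proof.
  intros Hth HE.
  assert (Hd : 0 < Rmin th (PI - th)) by (apply Rmin_pos; lra).
  apply (D_loc_eq (fun t => (sin t * p)^2) (fun t => fE A B (Ham A B t p) (cos t)) th _ _ _ Hd).
  - intros t Ht. apply ham_curve.
    pose proof (Rmin_l th (PI - th)); pose proof (Rmin_r th (PI - th)).
    apply Rabs_def2 in Ht. lra.
  - eapply Dext; [dtac|]. cbv beta. simpl INR; simpl pred. ring.
  - apply (D_fE A B (fun t => Ham A B t p) (fun t => cos t)); [exact HE|apply Dcos].
Qed.

Lemma base_good A B th p Et : 0 < th < PI -> D (fun t => Ham A B t p) th Et ->
  Good A B (Ham A B th p) Et (2*p) (cos th) (sin th * p) (- sin th) 0 (cos th * p) (sin th) (-1).
Proof.
  intros Hth HE. pose proof (sin_gt_0 th ltac:(lra) ltac:(lra)) as Hs.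
  pose proof (sin2_cos2 th) as H2. unfold Rsqr in H2.
  pose proof (base_L A B th p Et Hth HE) as L.
  split; [apply ham_curve; exact Hth|].
  split; [exact L|].
  split; [replace (1 - cos th ^ 2) with (sin th ^ 2) by (simpl; lra); ring|].
  split; [ring|].
  apply (Rmult_eq_reg_l (sin th)); [|lra].
  transitivity (2*(sin th * p)*(cos th * p) - (sin th * sin th)*Et); [ring|].
  rewrite L. simpl. replace (cos th * (cos th * 1)) with (1 - sin th * sin th) by lra. ring.
Qed.

Lemma mu_good A B lam mu th p del Et : 0 < th < PI -> 0 < del ->
  C1_sqrt_branch A B lam mu th p del -> D (fun t => Ham A B t p) th Et ->
  exists dmt dmp, D (fun t => mu t p) th dmt /\ D (fun q => mu th q) p dmp /\
    Good A B (Ham A B th p) Et (2*p) lam (mu th p) 0 0 dmt dmp 0.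
Proof.
  intros Hth Hdel [dmtf [dmpf Hb]] HEt.
  assert (H00 : Rabs (th - th) < del) by (rewrite Rminus_diag, Rabs_R0; lra).
  assert (Hp0 : Rabs (p - p) < del) by (rewrite Rminus_diag, Rabs_R0; lra).
  destruct (Hb th p H00 Hp0) as [C [[Pt Pq] _]].
  exists (dmtf th p), (dmpf th p). split; [exact Pt|]. split; [exact Pq|].
  pose proof (ham_Dq A B th p Hth) as HEq.
  assert (Lt : 2 * mu th p * dmtf th p = fp A B (Ham A B th p) lam * 0 + (1 - lam^2) * Et).
  { apply (D_loc_eq (fun t => mu t p ^ 2) (fun t => fE A B (Ham A B t p) lam) th _ _ _ Hdel).
    - intros t Ht. apply (Hb t p Ht Hp0).
    - eapply Dext; [apply Dpow; exact Pt|]. cbv beta. simpl INR; simpl pred. ring.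
    - apply (D_fE A B (fun t => Ham A B t p) (fun _ => lam)); [exact HEt|exact (Dconst lam th)]. }
  assert (Lq : 2 * mu th p * dmpf th p = fp A B (Ham A B th p) lam * 0 + (1 - lam^2) * (2*p)).
  { apply (D_loc_eq (fun q => mu th q ^ 2) (fun q => fE A B (Ham A B th q) lam) p _ _ _ Hdel).
    - intros q Hq. apply (Hb th q H00 Hq).
    - eapply Dext; [apply Dpow; exact Pq|]. cbv beta. simpl INR; simpl pred. ring.
    - apply (D_fE A B (fun q => Ham A B th q) (fun _ => lam)); [exact HEq|exact (Dconst lam p)]. }
  split; [exact C|]. split; [exact Lt|]. split; [exact Lq|]. split; [ring|].
  rewrite Rmult_0_r.
  destruct (Req_dec (mu th p) 0) as [Hm|Hm].
  - destruct (Req_dec (1 - lam^2) 0) as [Hl|Hl].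
    +
      assert (Hz : forall t q, Rabs (t - th) < del -> Rabs (q - p) < del -> mu t q = 0).
      { intros t q Ht Hq. destruct (Hb t q Ht Hq) as [Ct _].
        assert (Hc : fE A B (Ham A B t q) lam = fE A B (Ham A B th p) lam).
        { apply Rminus_diag_uniq.
          transitivity ((Ham A B t q - Ham A B th p)*(1 - lam^2)); [unfold fE; ring|].
          rewrite Hl; ring. }
        rewrite Hc, <- C, Hm in Ct. simpl in Ct.
        rewrite Rmult_1_r, Rmult_0_l in Ct. apply Rmult_integral in Ct. destruct Ct as [Ct|Ct]; exact Ct. }
      assert (Z1 : dmtf th p = 0).
      { apply (D_loc_eq (fun t => mu t p) (fun _ => 0) th _ _ _ Hdel); [|exact Pt|apply Dconst].
        intros t Ht. apply Hz; auto. }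
      assert (Z2 : dmpf th p = 0).
      { apply (D_loc_eq (fun q => mu th q) (fun _ => 0) p _ _ _ Hdel); [|exact Pq|apply Dconst].
        intros q Hq. apply Hz; auto. }
      rewrite Z1, Z2. ring.
    + rewrite Hm in Lt, Lq.
      assert (Et = 0) by (apply (Rmult_eq_reg_l (1 - lam^2)); auto; lra).
      assert (p = 0) by (apply (Rmult_eq_reg_l (2*(1 - lam^2))); [|lra]; lra).
      subst. ring.
  - apply (Rmult_eq_reg_l (2 * mu th p)); [|lra].
    transitivity ((2 * mu th p * dmtf th p) * (2*p) - (2 * mu th p * dmpf th p) * Et); [ring|].
    rewrite Lt, Lq. ring.
Qed.

Lemma add_special A B E x1 y1 x2 y2 X1t X1q Y1t Y1q X2t X2q Y2t Y2q k1 k2 :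
  Good A B E 0 0 x1 y1 X1t X1q Y1t Y1q k1 ->
  Good A B E 0 0 x2 y2 X2t X2q Y2t Y2q k2 ->
  x1 <> x2 -> y1 = 0 -> fp A B E x1 = 0 -> X2t = 0 -> X2q = 0 ->
  add_x E x1 y1 x2 y2 = x1 /\
  jX3 x1 y1 x2 y2 0 X1t Y1t X2t Y2t * jY3 E x1 y1 x2 y2 0 X1q Y1q X2q Y2q
  - jX3 x1 y1 x2 y2 0 X1q Y1q X2q Y2q * jY3 E x1 y1 x2 y2 0 X1t Y1t X2t Y2t
  = X1t*Y1q - X1q*Y1t.
Proof.
  intros [C1 _] [C2 [L2t [L2q _]]] H12 Hy1 Hf1 HX2t HX2q.
  assert (H21 : x2 - x1 <> 0) by (intro; apply H12; lra).
  assert (H12' : x1 - x2 <> 0) by (intro; apply H12; lra).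
  assert (Hw2 : y1 + add_slope x1 y1 x2 y2 * (x2 - x1) = y2)
    by (unfold add_slope; field; auto).
  assert (Hx3 : add_x E x1 y1 x2 y2 = x1).
  { unfold add_x. set (m := add_slope x1 y1 x2 y2) in *.
    assert (KF1 : (x2-x1)*(fp A B E x1 - 2*m*y1 - (x1-x2)*(x1-(- x1 - x2 + E + m^2)))
       = (fE A B E x2 - (y1+m*(x2-x1))^2) - (fE A B E x1 - y1^2))
      by (unfold fp, fE; ring).
    rewrite Hw2, <- C1, <- C2, Hf1, Hy1 in KF1.
    assert (Z : (x2-x1)*(x1-x2)*(x1 - (- x1 - x2 + E + m^2)) = 0) by lra.
    apply Rmult_integral in Z. destruct Z as [Z|Z].
    - apply Rmult_integral in Z. lra.
    - lra. }
  split; [exact Hx3|].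
  unfold jY3, jX3, jM. rewrite Hx3.
  subst X2t X2q.
  rewrite Hy1.
  assert (HY : y2 = 0 \/ (Y2t = 0 /\ Y2q = 0)).
  { destruct (Req_dec y2 0) as [H|H]; [left; exact H|right].
    split; apply (Rmult_eq_reg_l (2*y2)); try lra. }
  unfold add_slope.
  destruct HY as [Hy2|[Ht Hq]].
  - rewrite Hy2. field. auto.
  - rewrite Ht, Hq. field. auto.
Qed.


Lemma abs_lt1 x : Rabs x < 1 -> -1 < x < 1.
Proof. intro H. apply Rabs_def2 in H. lra. Qed.

Lemma sinp_ne (A th p : R) : 0 < th < PI -> sin th * p <> 0 -> p <> 0.
Proof. intros _ H Hp. apply H. rewrite Hp. ring. Qed.

Theorem proposition1 :
  (forall A B th p, 0 < th < PI ->
     (sin th * p) ^ 2 = fE A B (Ham A B th p) (cos th)) /\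
  (forall A B lam (mu : R -> R -> R) th p del,
     0 < th < PI -> 0 < del ->
     C1_sqrt_branch A B lam mu th p del ->
     cos th <> lam ->
     Rabs (T1_u A B lam mu th p) < 1 ->
     poisson_bracket_eq
       (fun t q => theta_of (T1_u A B lam mu t q))
       (fun t q => ptheta_of (T1_u A B lam mu t q) (T1_v A B lam mu t q)) th p 1 /\
     Ham A B (theta_of (T1_u A B lam mu th p))
             (ptheta_of (T1_u A B lam mu th p) (T1_v A B lam mu th p))
       = Ham A B th p) /\
  (forall A B th p,
     0 < th < PI -> sin th * p <> 0 ->
     Rabs (T2_u A B th p) < 1 ->
     poisson_bracket_eq
       (fun t q => theta_of (T2_u A B t q))
       (fun t q => ptheta_of (T2_u A B t q) (T2_v A B t q)) th p 2 /\
     Ham A B (theta_of (T2_u A B th p)) (ptheta_of (T2_u A B th p) (T2_v A B th p))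
       = Ham A B th p) /\
  (forall A B th p,
     0 < th < PI -> sin th * p <> 0 ->
     T2_u A B th p <> cos th ->
     Rabs (T3_u A B th p) < 1 ->
     poisson_bracket_eq
       (fun t q => theta_of (T3_u A B t q))
       (fun t q => ptheta_of (T3_u A B t q) (T3_v A B t q)) th p 3 /\
     Ham A B (theta_of (T3_u A B th p)) (ptheta_of (T3_u A B th p) (T3_v A B th p))
       = Ham A B th p).
Proof.
  split; [exact ham_curve|].
  split; [|split].
  -
    intros A B lam mu th p del Hth Hdel Hbr Hne Hr.
    destruct (ham_Dt A B th p Hth) as [Et HEt].
    pose proof (ham_Dq A B th p Hth) as HEq.
    pose proof (base_good A B th p Et Hth HEt) as G1.
    destruct (mu_good A B lam mu th p del Et Hth Hdel Hbr HEt) as [dmt [dmp [Pt [Pq G2]]]].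
    assert (Hvt : D (fun t => sin t * p) th (cos th * p))
      by (eapply Dext; [dtac|]; cbv beta; ring).
    assert (Hvq : D (fun q => sin th * q) p (sin th))
      by (eapply Dext; [dtac|]; cbv beta; ring).
    destruct (D_add (fun t => Ham A B t p) (fun t => cos t) (fun t => sin t * p)
               (fun _ => lam) (fun t => mu t p) th _ _ _ _ _ HEt (Dcos th) Hvt
               (Dconst lam th) Pt Hne) as [Dut Dvt].
    destruct (D_add (fun q => Ham A B th q) (fun _ => cos th) (fun q => sin th * q)
               (fun _ => lam) (fun q => mu th q) p _ _ _ _ _ HEq (Dconst (cos th) p) Hvq
               (Dconst lam p) Pq Hne) as [Duq Dvq].
    cbv beta in Dut, Dvt, Duq, Dvq.
    pose proof (add_good _ _ _ _ _ _ _ _ _ _ _ _ _ _ _ _ _ _ _ G1 G2 Hne) as G3.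
    pose proof (abs_lt1 _ Hr) as Hr'.
    split.
    + apply (pb_conv (T1_u A B lam mu) (T1_v A B lam mu) th p _ _ _ _ 1 Dut Duq Dvt Dvq Hr').
      destruct (Req_dec Et 0) as [HE0|HE0]; [destruct (Req_dec p 0) as [Hp0|Hp0]|].
      *
        subst Et p.
        replace (2*0) with 0 in G1, G2, Duq, Dvq by ring.
        assert (Hfp : fp A B (Ham A B th 0) (cos th) = 0).
        { destruct G1 as [_ [L _]].
          pose proof (sin_gt_0 th ltac:(lra) ltac:(lra)) as Hs.
          apply (Rmult_eq_reg_l (- sin th)); [|lra]. lra. }
        destruct (add_special _ _ _ _ _ _ _ _ _ _ _ _ _ _ _ _ _ G1 G2 Hne
                    ltac:(ring) Hfp eq_refl eq_refl) as [Hx3 Hw].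
        unfold T1_u. rewrite Hx3. replace (2*0) with 0 by ring. rewrite Hw.
        pose proof (sin2_cos2 th) as H2. unfold Rsqr in H2. simpl. nra.
      * apply final_wedge in G3; [| right; lra | ].
        -- unfold T1_u. rewrite G3. ring.
        -- unfold T1_u in Hr'. nra.
      * apply final_wedge in G3; [| left; lra | ].
        -- unfold T1_u. rewrite G3. ring.
        -- unfold T1_u in Hr'. nra.
    + apply ham_back; [exact Hr'|]. exact (proj1 G3).
  -
    intros A B th p Hth Hv Hr.
    pose proof (sinp_ne A th p Hth Hv) as Hp.
    destruct (ham_Dt A B th p Hth) as [Et HEt].
    pose proof (ham_Dq A B th p Hth) as HEq.
    pose proof (base_good A B th p Et Hth HEt) as G1.
    assert (Hvt : D (fun t => sin t * p) th (cos th * p))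
      by (eapply Dext; [dtac|]; cbv beta; ring).
    assert (Hvq : D (fun q => sin th * q) p (sin th))
      by (eapply Dext; [dtac|]; cbv beta; ring).
    destruct (D_dbl A B (fun t => Ham A B t p) (fun t => cos t) (fun t => sin t * p)
               th _ _ _ HEt (Dcos th) Hvt Hv) as [Dut Dvt].
    destruct (D_dbl A B (fun q => Ham A B th q) (fun _ => cos th) (fun q => sin th * q)
               p _ _ _ HEq (Dconst (cos th) p) Hvq Hv) as [Duq Dvq].
    cbv beta in Dut, Dvt, Duq, Dvq.
    pose proof (dbl_good _ _ _ _ _ _ _ _ _ _ _ _ G1 Hv) as G3.
    pose proof (abs_lt1 _ Hr) as Hr'.
    split.
    + apply (pb_conv (T2_u A B) (T2_v A B) th p _ _ _ _ 2 Dut Duq Dvt Dvq Hr').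
      apply final_wedge in G3; [| right; lra | ].
      -- unfold T2_u. rewrite G3. ring.
      -- unfold T2_u in Hr'. nra.
    + apply ham_back; [exact Hr'|]. exact (proj1 G3).
  -
    intros A B th p Hth Hv Hne Hr.
    pose proof (sinp_ne A th p Hth Hv) as Hp.
    destruct (ham_Dt A B th p Hth) as [Et HEt].
    pose proof (ham_Dq A B th p Hth) as HEq.
    pose proof (base_good A B th p Et Hth HEt) as G1.
    assert (Hvt : D (fun t => sin t * p) th (cos th * p))
      by (eapply Dext; [dtac|]; cbv beta; ring).
    assert (Hvq : D (fun q => sin th * q) p (sin th))
      by (eapply Dext; [dtac|]; cbv beta; ring).
    destruct (D_dbl A B (fun t => Ham A B t p) (fun t => cos t) (fun t => sin t * p)
               th _ _ _ HEt (Dcos th) Hvt Hv) as [D2ut D2vt].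
    destruct (D_dbl A B (fun q => Ham A B th q) (fun _ => cos th) (fun q => sin th * q)
               p _ _ _ HEq (Dconst (cos th) p) Hvq Hv) as [D2uq D2vq].
    assert (Hne' : cos th <> dbl_x A B (Ham A B th p) (cos th) (sin th * p))
      by (intro H; apply Hne; unfold T2_u; rewrite <- H; reflexivity).
    destruct (D_add (fun t => Ham A B t p) (fun t => cos t) (fun t => sin t * p)
               (fun t => dbl_x A B (Ham A B t p) (cos t) (sin t * p))
               (fun t => dbl_y A B (Ham A B t p) (cos t) (sin t * p))
               th _ _ _ _ _ HEt (Dcos th) Hvt D2ut D2vt Hne') as [Dut Dvt].
    destruct (D_add (fun q => Ham A B th q) (fun _ => cos th) (fun q => sin th * q)
               (fun q => dbl_x A B (Ham A B th q) (cos th) (sin th * q))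
               (fun q => dbl_y A B (Ham A B th q) (cos th) (sin th * q))
               p _ _ _ _ _ HEq (Dconst (cos th) p) Hvq D2uq D2vq Hne') as [Duq Dvq].
    cbv beta in Dut, Dvt, Duq, Dvq.
    pose proof (dbl_good _ _ _ _ _ _ _ _ _ _ _ _ G1 Hv) as G2.
    pose proof (add_good _ _ _ _ _ _ _ _ _ _ _ _ _ _ _ _ _ _ _ G1 G2 Hne') as G3.
    pose proof (abs_lt1 _ Hr) as Hr'.
    split.
    + apply (pb_conv (T3_u A B) (T3_v A B) th p _ _ _ _ 3 Dut Duq Dvt Dvq Hr').
      apply final_wedge in G3; [| right; lra | ].
      -- unfold T3_u, tpl_x. rewrite G3. ring.
      -- unfold T3_u, tpl_x in Hr'. nra.
    + apply ham_back; [exact Hr'|]. exact (proj1 G3).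
Qed.
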